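(* Let $\delta\in(0,1]$ and let $\mathbf y_1,\ldots,\mathbf y_r\in\mathbb{R}^d$ be $r\le d$ unit-norm vectors such that for every $i\le r$, $\|P_{\mathrm{Span}(\mathbf y_j,\,j<i)^\perp}(\mathbf y_i)\|\ge\delta$. Let $\mathbf Y=[\mathbf y_1,\ldots,\mathbf y_r]$ and $s\ge2$. Then there exist $\lceil r/s\rceil$ orthonormal vectors $\mathbf Z=[\mathbf z_1,\ldots,\mathbf z_{\lceil r/s\rceil}]$ such that for every $\mathbf a\in\mathbb{R}^d$, $$\|\mathbf Z^\top\mathbf a\|_\infty\le\left(\frac{\sqrt d}{\delta}\right)^{s/(s-1)}\|\mathbf Y^\top\mathbf a\|_\infty.$$
   Context: For a linear subspace $E\subseteq\mathbb{R}^d$, $P_E$ denotes the orthogonal projection onto $E$; $\mathrm{Span}(\emptyset)=\{0\}$. *)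

(* Defs.v *)
From HB Require Import structures.
From mathcomp Require Import all_boot all_order all_algebra.
From mathcomp Require Import reals exp.
Set Implicit Arguments. Unset Strict Implicit. Unset Printing Implicit Defensive.
Import Order.TTheory GRing.Theory Num.Theory.
Local Open Scope ring_scope.

Section Defs.
Variable R : realType.

Definition norm2 d (v : 'rV[R]_d) : R := Num.sqrt (\sum_(j < d) v 0 j ^+ 2).

Definition linf d (v : 'rV[R]_d) : R := \big[Num.max/0]_(j < d) `|v 0 j|.

(* Orthogonal projection onto the row space E of a matrix A (a subspace of R^d):
   with B = row_base A a basis of E (as rows), P_E v = v B^T (B B^T)^{-1} B.
   For E = {0} (B has no rows) this is 0. *)
Definition orth_proj m d (A : 'M[R]_(m, d)) (v : 'rV[R]_d) : 'rV[R]_d :=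
  let B := row_base A in v *m B^T *m invmx (B *m B^T) *m B.

Definition orth_compl m d (A : 'M[R]_(m, d)) : 'M[R]_d := kermx A^T.

Definition span_before r d (Y : 'M[R]_(r, d)) (i : nat) : 'M[R]_(r, d) :=
  \matrix_(j < r) (if (j < i)%N then row j Y else 0).

End Defs.

Definition ceil_div (r s : nat) : nat := (r + s.-1) %/ s.

(* Main.v *)
Require Import Defs.
From HB Require Import structures.
From mathcomp Require Import all_boot all_order all_algebra.
From mathcomp Require Import reals exp.
From mathcomp Require Import complex sesquilinear spectral.
From mathcomp Require Import ring lra zify.
Set Implicit Arguments. Unset Strict Implicit. Unset Printing Implicit Defensive.
Import Order.TTheory GRing.Theory Num.Theory.
Local Open Scope ring_scope.
Section Eig.
Variable R : realType.

Lemma real_eig n (A : 'M[R]_n.+1) : A^T = A -> exists a, eigenvalue A a.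
Proof.
move=> sA.
pose f := real_complex R.
pose Ac := map_mx f A.
have Asym : Ac \is symmetricmx.
  apply/is_hermitianmxP; rewrite expr0 scale1r.
  by apply/matrixP=> i j; rewrite !mxE -{1}sA mxE.
have Areal : Ac \is a mxOver Num.real.
  apply/mxOverP => i j; rewrite /Ac mxE /f.
  by rewrite realE ler0c lecE /= eqxx /= -realE num_real.
have Aherm := realsym_hermsym Asym Areal.
have /orthomx_spectralP Aeq := hermitian_normalmx Aherm.
have Dreal := hermitian_spectral_diag_real Aherm.
set P := spectralmx Ac in Aeq; set D := spectral_diag Ac in Aeq Dreal.
have Pu : P \in unitmx by apply: spectral_unit.
have ev : eigenvalue Ac (D 0 0).
  apply/eigenvalueP; exists (delta_mx 0 0 *m P).
    rewrite Aeq !mulmxA mulmxK // scalemxAl; congr (_ *m P).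
    rewrite mul_mx_diag; apply/matrixP => i j; rewrite !mxE.
    rewrite ord1 eqxx /=; case: eqP => [->|_]; first by rewrite mulrC.
    by rewrite mul0r mulr0.
  rewrite mulmx_free_eq0 ?row_free_unit //.
  apply/eqP => /matrixP /(_ 0 0); rewrite !mxE !eqxx /= => /eqP; rewrite oner_eq0.
  done.
have : D 0 0 \is Num.real by apply: (mxOverP Dreal).
rewrite realE !lecE /= => hIm.
have eD : D 0 0 = f (complex.Re (D 0 0)).
  apply/eqP; rewrite eq_complex /= eqxx /=.
  by case/orP: hIm => /andP[/eqP h _]; rewrite h.
exists (complex.Re (D 0 0)).
by move: ev; rewrite eD !eigenvalue_root_char -map_char_poly fmorph_root.
Qed.
End Eig.

Section HH.
Variable R : realType.

Lemma sqsum_eq0 n (w : 'rV[R]_n) : (w *m w^T) 0 0 = 0 -> w = 0.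
Proof.
rewrite mxE => h.
have pos : forall i, predT i -> 0 <= w 0 i * w^T i 0.
  by move=> i _; rewrite mxE -expr2 sqr_ge0.
apply/rowP => j; rewrite mxE.
have /eqP := psumr_eq0P pos h (i := j) isT.
by rewrite mxE mulf_eq0 orbb => /eqP.
Qed.

Lemma householder n (u : 'rV[R]_n.+1) : u *m u^T = 1%:M ->
  exists H : 'M_n.+1, H *m H^T = 1%:M /\ row 0 H = u.
Proof.
move=> uu.
case: (eqVneq u (delta_mx 0 0)) => [->|ne].
  by exists 1%:M; rewrite trmx1 mulmx1 row1.
set e : 'rV[R]_n.+1 := delta_mx 0 0 in ne *.
set w := e - u.
have ee : e *m e^T = 1%:M.
  apply/matrixP => i j; rewrite !ord1 !mxE (bigD1 0) //= big1.
    by rewrite !mxE !eqxx mulr1 addr0.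
  by move=> k /negPf nk; rewrite !mxE nk /= mulr0.
set t := (e *m u^T) 0 0.
have eu : e *m u^T = t%:M by rewrite [LHS]mx11_scalar.
have ue : u *m e^T = t%:M.
  by rewrite -[u *m e^T]trmxK trmx_mul trmxK eu tr_scalar_mx.
have ww : w *m w^T = (2 - 2 * t)%:M.
  rewrite /w linearB /= mulmxBl !mulmxBr ee eu ue uu.
  by apply/matrixP => i j; rewrite !ord1 !mxE eqxx /=; ring.
set c := 2 - 2 * t.
have cn0 : c != 0.
  apply/eqP => c0; move: ne; rewrite eq_sym -subr_eq0 -/w.
  by rewrite (sqsum_eq0 (w := w)) ?eqxx // ww -/c c0 mxE.
pose k := 2 / c.
exists (1%:M - k *: (w^T *m w)).
have HT : (1%:M - k *: (w^T *m w))^T = 1%:M - k *: (w^T *m w).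
  by rewrite linearB /= linearZ /= trmx_mul trmxK trmx1.
split.
  rewrite HT.
  have XX : (w^T *m w) *m (w^T *m w) = c *: (w^T *m w).
    rewrite mulmxA -[w^T *m w *m w^T]mulmxA ww mul_mx_scalar -scalemxAl //.
  move: XX; set X := w^T *m w; clearbody X => XX.
  rewrite mulmxBl !mulmxBr mul1mx mulmx1 -!scalemxAl -!scalemxAr XX mul1mx.
  rewrite !scalerA -scalerBl -scaleNr -addrA -scalerBl.
  have -> : - k - (k - k * k * c) = 0 by rewrite /k; field.
  by rewrite scale0r addr0.
rewrite rowE mulmxBr mulmx1 -scalemxAr mulmxA.
have -> : delta_mx 0 0 *m w^T = (1 - t)%:M.
  rewrite -/e /w linearB /= mulmxBr ee eu.
  by apply/matrixP => i j; rewrite !ord1 !mxE eqxx /=.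
rewrite mul_scalar_mx scalerA.
have -> : k * (1 - t) = 1 by rewrite /k /c; field; rewrite -/c.
by rewrite scale1r /w -/e opprB addrC subrK.
Qed.
End HH.

Section Spec.
Variable R : realType.

Lemma spectral_real n (A : 'M[R]_n) : A^T = A ->
  exists O : 'M_n, exists l : 'rV_n,
    O *m O^T = 1%:M /\ O *m A *m O^T = diag_mx l.
Proof.
elim: n A => [|n IH] A sA.
  exists 1%:M, 0; split; first by rewrite trmx1 mulmx1.
  by apply/matrixP => [[]].
have [a ev] := real_eig sA.
have [v vA vn0] := eigenvalueP ev.
pose nv := (v *m v^T) 0 0.
have nvpos : 0 < nv.
  rewrite lt0r; apply/andP; split.
    by apply/eqP => h; move: vn0; rewrite (sqsum_eq0 h) eqxx.
  by rewrite /nv mxE sumr_ge0 // => i _; rewrite mxE -expr2 sqr_ge0.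
pose u := (Num.sqrt nv)^-1 *: v.
have uu : u *m u^T = 1%:M.
  rewrite /u linearZ /= -scalemxAl -scalemxAr [v *m v^T]mx11_scalar -/nv.
  rewrite !scalerA -expr2 exprVn sqr_sqrtr ?ltW // scale_scalar_mx.
  by rewrite mulVf ?gt_eqF.
have uA : u *m A = a *: u.
  by rewrite /u -scalemxAl vA !scalerA mulrC.
have [H [HH Hrow]] := householder uu.
pose B := H *m A *m H^T.
have sB : B^T = B by rewrite /B !trmx_mul trmxK sA mulmxA.
have rB : row 0 B = a *: delta_mx 0 0.
  rewrite /B !row_mul Hrow uA -scalemxAl -Hrow -row_mul HH row1 //.
have Bdef : B = H *m A *m H^T by [].
clearbody B.
pose B' := drsubmx (B : 'M_(1 + n)).
have Bblk : (B : 'M_(1 + n)) = block_mx (a%:M : 'M_1) 0 0 B'.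
  have Be : forall j : 'I_n.+1, B 0 j = a * ((0:'I_n.+1) == j)%:R.
    move=> j; have := congr1 (fun M : 'rV_n.+1 => M 0 j) rB.
    by rewrite !mxE /= => ->; rewrite eq_sym.
  have l0 : forall i : 'I_1, lshift n i = 0 :> 'I_(1 + n).
    by move=> i; apply/val_inj; rewrite /= ord1.
  rewrite -[LHS](@submxK _ 1 n 1 n); congr block_mx.
  - apply/matrixP => i j; rewrite !mxE l0 [lshift n j]l0.
    by rewrite ord1 [j]ord1 Be !eqxx mulr1 mulr1n.
  - apply/matrixP => i j; rewrite !mxE l0.
    by rewrite Be; case: eqP => [/(congr1 val)|] //=; rewrite mulr0.
  - apply/matrixP => i j; rewrite !mxE l0 -sB mxE.
    by rewrite Be; case: eqP => [/(congr1 val)|] //=; rewrite mulr0.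
have sB' : B'^T = B' by rewrite /B' trmx_drsub sB.
have [O' [l' [OO' OAO']]] := IH B' sB'.
exists (block_mx (1%:M : 'M_1) 0 0 O' *m H), (row_mx (a%:M : 'M_1) l').
have blkT : (block_mx (1%:M : 'M_1) 0 0 O')^T = block_mx 1%:M 0 0 O'^T.
  by rewrite tr_block_mx !trmx0 trmx1.
split.
  rewrite trmx_mul mulmxA -[_ *m H *m H^T]mulmxA HH mulmx1 blkT.
  rewrite (@mulmx_block _ 1 n 1 n 1 n).
  rewrite !mulmx0 !mul0mx !mulmx1 !addr0 !add0r OO'.
  by rewrite -scalar_mx_block.
rewrite trmx_mul blkT !mulmxA -[_ *m H *m A]mulmxA -[_ *m (H *m A) *m H^T]mulmxA.
rewrite -Bdef Bblk (@mulmx_block _ 1 n 1 n 1 n) (@mulmx_block _ 1 n 1 n 1 n).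
rewrite !mulmx0 !mul0mx !mulmx1 !mul1mx !addr0 !add0r OAO' (@diag_mx_row _ n 1).
have -> : diag_mx (a%:M : 'rV_1) = a%:M.
  by apply/matrixP => i j; rewrite !ord1 !mxE.
by rewrite mul0mx.
Qed.
End Spec.

Section Proj.
Variable R : realType.

Lemma gram_unit k d (Bm : 'M[R]_(k, d)) : row_free Bm -> Bm *m Bm^T \in unitmx.
Proof.
move=> fB; rewrite -row_free_unit -kermx_eq0; apply/eqP/row_matrixP => i.
set K := kermx _; have : row i K *m (Bm *m Bm^T) = 0.
  by rewrite -row_mul mulmx_ker row0.
set x := row i K => hx.
have : (x *m Bm) *m (x *m Bm)^T = 0.
  by rewrite trmx_mul !mulmxA -[x *m Bm *m Bm^T]mulmxA hx !mul0mx.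
move=> /(congr1 (fun M : 'M_1 => M 0 0)); rewrite [RHS]mxE => /sqsum_eq0 h.
by apply/eqP; move: h => /eqP; rewrite mulmx_free_eq0 // row0.
Qed.

Lemma proj_props m d (F : 'M[R]_(m,d)) (y : 'rV_d) :
  orth_proj (orth_compl F) y *m F^T = 0 /\
  (y - orth_proj (orth_compl F) y <= F)%MS.
Proof.
rewrite /orth_proj /orth_compl.
set E := kermx F^T; set Bm := row_base E.
have EF : E *m F^T = 0 by apply: mulmx_ker.
have BE : (Bm <= E)%MS by rewrite /Bm eq_row_base.
have EB : (E <= Bm)%MS by rewrite /Bm eq_row_base.
have fB : row_free Bm := row_base_free E.
clearbody Bm.
have BF : Bm *m F^T = 0.
  by have [X ->] := submxP BE; rewrite -mulmxA EF mulmx0.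
split; first by rewrite -mulmxA BF mulmx0.
have Mu : Bm *m Bm^T \in unitmx by apply: gram_unit.
have h1 : (y - y *m Bm^T *m invmx (Bm *m Bm^T) *m Bm) *m Bm^T = 0.
  by rewrite mulmxBl -!mulmxA mulmxA mulmxA mulmxKV // subrr.
have h2 : (y - y *m Bm^T *m invmx (Bm *m Bm^T) *m Bm) *m E^T = 0.
  move: h1; generalize (y - y *m Bm^T *m invmx (Bm *m Bm^T) *m Bm) => z hz.
  have [X eX] := submxP EB.
  by rewrite eX trmx_mul mulmxA hz mul0mx.
have sub1 : (y - y *m Bm^T *m invmx (Bm *m Bm^T) *m Bm <= kermx E^T)%MS.
  by apply/sub_kermxP.
have sub2 : (F <= kermx E^T)%MS.
  by apply/sub_kermxP; rewrite -[F *m E^T]trmxK trmx_mul trmxK EF trmx0.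
have rk : \rank (kermx E^T) = \rank F.
  rewrite mxrank_ker mxrank_tr /E mxrank_ker mxrank_tr subKn //.
  by apply: rank_leq_col.
have := mxrank_leqif_sup sub2; rewrite rk => /leqif_refl sub3.
by apply: submx_trans sub1 _.
Qed.

Lemma det_gram r d (Y : 'M[R]_(r,d)) (delta : R) : 0 <= delta ->
  (forall i : 'I_r,
      delta <= norm2 (orth_proj (orth_compl (span_before Y i)) (row i Y))) ->
  delta ^+ (2 * r) <= \det (Y *m Y^T).
Proof.
move=> d0 hyp.
pose q (i : 'I_r) := orth_proj (orth_compl (span_before Y i)) (row i Y).
pose Dm (i : 'I_r) := diag_mx (\row_(j < r) ((j < i)%N)%:R : 'rV[R]_r).
have Fe : forall i : 'I_r, span_before Y i = Dm i *m Y.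
  move=> i; rewrite mul_diag_mx; apply/matrixP => j l; rewrite !mxE.
  by case: ifP => _; rewrite ?mxE ?mul1r ?mul0r.
pose c (i : 'I_r) : 'rV_r := ((row i Y - q i) *m pinvmx (span_before Y i)) *m Dm i.
have qe : forall i : 'I_r, q i = row i Y - c i *m Y.
  move=> i; have := (proj_props (span_before Y i) (row i Y)).2.
  move=> /mulmxKpV; rewrite -/(q i) {2}Fe mulmxA -/(c i) => ->.
  by rewrite opprB addrC subrK.
have c_ge : forall (i j : 'I_r), (i <= j)%N -> c i 0 j = 0.
  move=> i j ij.
  have h : forall x : 'rV_r, (x *m Dm i) 0 j = x 0 j * ((j < i)%N)%:R.
    by move=> x; rewrite mul_mx_diag !mxE.
  by rewrite /c h ltnNge ij mulr0.
pose T := \matrix_(i, j) ((i == j)%:R - c i 0 j) : 'M[R]_r.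
have rowT : forall i : 'I_r, row i T = delta_mx 0 i - c i.
  by move=> i; apply/rowP => j; rewrite !mxE eqxx /= eq_sym.
have rowQ : forall i : 'I_r, row i (T *m Y) = q i.
  by move=> i; rewrite row_mul rowT mulmxBl -rowE qe.
have Tlow : forall (j k : 'I_r), (j < k)%N -> T j k = 0.
  move=> j k jk; rewrite mxE c_ge; last exact: ltnW.
  rewrite subr0.
  by case: eqP => // ejk; move: jk; rewrite ejk ltnn.
have detT : \det T = 1.
  rewrite det_trig; last by apply/is_trig_mxP.
  by rewrite big1 // => i _; rewrite mxE eqxx c_ge // subr0.
set Q := T *m Y.
have orth : forall (i k : 'I_r), (k < i)%N -> (Q *m Y^T) i k = 0.
  move=> i k ki.
  have := congr1 (fun M : 'M_(1, r) => M 0 k) (proj_props (span_before Y i) (row i Y)).1.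
  rewrite -/(q i) -(rowQ i) mxE [RHS]mxE => <-.
  rewrite mxE; apply: eq_bigr => l _; rewrite !mxE ki mxE //.
have QQ : Q *m Q^T = (Q *m Y^T) *m T^T by rewrite /Q trmx_mul mulmxA.
have QQlow : forall (i j : 'I_r), (j < i)%N -> (Q *m Q^T) i j = 0.
  move=> i j ji; rewrite QQ mxE big1 // => k _.
  case: (ltnP k i) => [ki|ik]; first by rewrite orth // mul0r.
  by rewrite [T^T k j]mxE Tlow ?mulr0 // (leq_trans ji ik).
have QQsym : (Q *m Q^T)^T = Q *m Q^T by rewrite trmx_mul trmxK.
have detQ : \det (Q *m Q^T) = \det (Y *m Y^T).
  by rewrite /Q trmx_mul !mulmxA !det_mulmx -mulmxA det_mulmx det_tr detT !mul1r mulr1.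
rewrite -detQ det_trig; last first.
  apply/is_trig_mxP => i j ij; rewrite -QQsym mxE; exact: QQlow.
rewrite exprM.
have -> : (delta ^+ 2) ^+ r = \prod_(i < r) delta ^+ 2 by rewrite prodr_const card_ord.
apply: ler_prod => i _.
rewrite sqr_ge0 /=.
have nq := hyp i; rewrite -/(q i) /norm2 in nq.
have -> : (Q *m Q^T) i i = \sum_(j < d) q i 0 j ^+ 2.
  rewrite mxE; apply: eq_bigr => j _.
  by rewrite -(rowQ i) [Q^T j i]mxE [row _ _ 0 j]mxE expr2.
have s0 : 0 <= \sum_(j < d) q i 0 j ^+ 2 by apply: sumr_ge0 => jj _; apply: sqr_ge0.
rewrite -(sqr_sqrtr s0) expr2 expr2; apply: ler_pM => //.
Qed.
End Proj.

Section Aux.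
Variable R : realType.

Lemma linf_ge0 n (v : 'rV[R]_n) : 0 <= linf v.
Proof.
rewrite /linf; elim/big_ind: _ => // x y hx hy.
by rewrite le_max hx.
Qed.

Lemma linf_le n (v : 'rV[R]_n) b : 0 <= b -> (forall j, `|v 0 j| <= b) -> linf v <= b.
Proof.
move=> b0 h; rewrite /linf; elim/big_ind: _ => // x y hx hy.
by rewrite ge_max hx hy.
Qed.

Lemma linf_ge n (v : 'rV[R]_n) j : `|v 0 j| <= linf v.
Proof.
rewrite /linf (bigD1 j) //= le_max lexx //.
Qed.

Lemma aux_sq (S N : R) : 0 < N -> 0 <= 1 - 2 * (S / N) * S + N * (S / N) ^+ 2 ->
  S ^+ 2 <= N.
Proof.
move=> Np h.
have : 0 <= 1 - S ^+ 2 / N.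
  suff -> : 1 - S ^+ 2 / N = 1 - 2 * (S / N) * S + N * (S / N) ^+ 2 by [].
  by field; rewrite gt_eqF.
by rewrite subr_ge0 ler_pdivrMr // mul1r.
Qed.

Lemma cs_sum n (v : 'I_n -> R) : \sum_i v i ^+ 2 = 1 ->
  \sum_i `|v i| <= Num.sqrt n%:R.
Proof.
move=> h.
case: n v h => [|n] v h.
  by rewrite big_ord0 sqrtr_ge0.
set S := \sum_i `|v i|.
have S0 : 0 <= S by apply: sumr_ge0 => i _.
have rpos : 0 < n.+1%:R :> R by rewrite ltr0n.
set t := S / n.+1%:R.
have e : \sum_i (`|v i| - t) ^+ 2 = 1 - 2 * t * S + n.+1%:R * t ^+ 2.
  transitivity (\sum_i (v i ^+ 2 + (- (2 * t)) * `|v i| + t ^+ 2)).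
    by apply: eq_bigr => i _; rewrite -[v i ^+ 2]real_normK ?num_real //; ring.
  rewrite !big_split /= h -mulr_sumr sumr_const card_ord -/S.
  by rewrite mulr_natl; ring.
have : 0 <= \sum_i (`|v i| - t) ^+ 2 by apply: sumr_ge0 => i _; apply: sqr_ge0.
rewrite e /t => h2.
have h3 : S ^+ 2 <= n.+1%:R by apply: aux_sq.
by rewrite -(ger0_norm S0) -sqrtr_sqr ler_sqrt // ltW.
Qed.

Lemma prod_lt n (l b : 'I_n -> R) (i0 : 'I_n) :
  (forall i, 0 <= l i <= b i) -> (forall i, 0 < b i) -> l i0 < b i0 ->
  \prod_i l i < \prod_i b i.
Proof.
move=> hlb hb hi0.
rewrite (bigD1 i0) //= [X in _ < X](bigD1 i0) //=.
have P1 : \prod_(i | i != i0) l i <= \prod_(i | i != i0) b i.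
  by apply: ler_prod => i _; apply: hlb.
have P2 : 0 < \prod_(i | i != i0) b i by apply: prodr_gt0 => i _.
have l0 : 0 <= l i0 by case/andP: (hlb i0).
apply: (le_lt_trans (y := l i0 * \prod_(i | i != i0) b i)).
  by apply: ler_wpM2l.
by rewrite ltr_pM2r.
Qed.


Lemma nat_ineq (r s m : nat) : (2 <= s)%N -> ((m-1)*s <= r)%N -> (m <= r)%N -> (1 <= m)%N ->
  (2 * r * (s - 1) <= s * (2 * (r - m + 1)))%N.
Proof. move=> *; nia. Qed.

Lemma pow_arith (r d s m : nat) (delta : R) : 0 < delta -> delta <= 1 ->
  (1 <= r)%N -> (r <= d)%N -> (2 <= s)%N -> ((m-1)*s <= r)%N -> (m <= r)%N ->
  (1 <= m)%N ->
  (1 <= powR (Num.sqrt d%:R / delta) (s%:R / (s%:R - 1))) /\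
  (r%:R ^+ (m-1) * (r%:R / (powR (Num.sqrt d%:R / delta) (s%:R / (s%:R - 1))) ^+ 2) ^+ (r - m + 1)
    <= delta ^+ (2 * r)).
Proof.
move=> dp d1 r1 rd s2 ms mr m1.
set X := Num.sqrt d%:R / delta.
set e := s%:R / (s%:R - 1).
have sd1 : 1 <= Num.sqrt d%:R :> R.
  rewrite -[X in X <= _]sqrtr1 ler_sqrt ?ler0n // ler1n; exact: (leq_trans r1 rd).
have X1 : 1 <= X by rewrite /X ler_pdivlMr // mul1r (le_trans d1 sd1).
have s1 : 0 < s%:R - 1 :> R.
  by rewrite subr_gt0 ltr1n.
have e1 : 1 <= e by rewrite /e ler_pdivlMr // mul1r lerBlDr lerDl.
have K1 : 1 <= X `^ e by apply: le_trans X1 (le1r_powR X1 e1).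
split => //.
set K := X `^ e.
have K0 : 0 < K by apply: lt_le_trans K1.
set p := (r - m + 1)%N.
have rp : ((m - 1) + p)%N = r by rewrite /p; lia.
rewrite expr_div_n mulrA -exprD rp ler_pdivrMr ?exprn_gt0 ?exprn_gt0 //.
rewrite -exprM.
have KK : K ^+ (2 * p) = X `^ (e * (2 * p)%:R).
  by rewrite powRrM powR_mulrn // ltW.
rewrite KK.
have Xr : X ^+ (2 * r) = X `^ (2 * r)%:R by rewrite powR_mulrn // (le_trans _ X1).
have ex : (2 * r)%:R <= e * (2 * p)%:R :> R.
  rewrite /e mulrAC ler_pdivlMr //.
  have -> : s%:R - 1 = (s - 1)%N%:R :> R by rewrite natrB ?(leq_trans _ s2).
  rewrite -!natrM ler_nat.
  by apply: nat_ineq.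
apply: (le_trans (y := delta ^+ (2 * r) * X ^+ (2 * r))); last first.
  rewrite Xr; apply: ler_wpM2l; first by rewrite exprn_ge0 // ltW.
  exact: (ler_powR X1 ex).
rewrite -exprMn /X mulrCA divff ?gt_eqF // mulr1 exprM sqr_sqrtr ?ler0n //.
by rewrite lerXn2r ?nnegrE ?ler0n // ler_nat.
Qed.
End Aux.

Unset Implicit Arguments.
Theorem lemma22 (R : realType) (d r s : nat) (delta : R)
    (Y : 'M[R]_(r, d)) :
  0 < delta -> delta <= 1 ->
  (r <= d)%N ->
  (forall i : 'I_r, norm2 (row i Y) = 1) ->
  (forall i : 'I_r,
      delta <= norm2 (orth_proj (orth_compl (span_before Y i)) (row i Y))) ->
  (2 <= s)%N ->
  exists Z : 'M[R]_(ceil_div r s, d),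
    Z *m Z^T = 1%:M /\
    forall a : 'rV[R]_d,
      linf (a *m Z^T) <=
        powR (Num.sqrt d%:R / delta) (s%:R / (s%:R - 1)) * linf (a *m Y^T).
Proof.
move=> dpos d1 rd ynorm hyp s2.
have mdiv : (ceil_div r s * s <= r + s.-1)%N by rewrite /ceil_div leq_trunc_div.
move: mdiv; set m := ceil_div r s => mdiv.
set K := powR (Num.sqrt d%:R / delta) (s%:R / (s%:R - 1)).
have K0 : 0 <= K by apply: powR_ge0.
case: (posnP m) => [m0|mpos].
  exists 0; split.
    by apply/matrixP => i; move: (ltn_ord i); rewrite {2}m0.
  move=> a; apply: linf_le; first by rewrite mulr_ge0 ?linf_ge0.
  by move=> j; move: (ltn_ord j); rewrite {2}m0.
have sm : (s <= m * s)%N by rewrite leq_pmull.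
have r1 : (1 <= r)%N by lia.
have ms : ((m - 1) * s <= r)%N by rewrite mulnBl mul1n; lia.
have mr : (m <= r)%N.
  have : ((m - 1) * 2 <= (m - 1) * s)%N by rewrite leq_mul2l s2 orbT.
  rewrite mulnBl mul1n in ms *; lia.
have [K1 key] := pow_arith dpos d1 r1 rd s2 ms mr mpos.
rewrite -/K in K1 key.
have Kpos : 0 < K by apply: lt_le_trans K1.
set G := Y *m Y^T.
have sG : G^T = G by rewrite /G trmx_mul trmxK.
have [O [l [OO OGO]]] := spectral_real sG.
have OTO : O^T *m O = 1%:M := mulmx1C OO.
have le : forall i, l 0 i = \sum_j (O *m Y) i j ^+ 2.
  move=> i; have := congr1 (fun M : 'M_r => M i i) OGO.
  rewrite [in RHS]mxE eqxx mulr1n => <-.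
  rewrite /G mulmxA -(mulmxA (O *m Y)) -trmx_mul mxE.
  by under eq_bigr => j _ do rewrite [(O *m Y)^T j i]mxE -expr2.
have l0 : forall i, 0 <= l 0 i.
  by move=> i; rewrite le sumr_ge0 // => j _; apply: sqr_ge0.
have trl : \sum_i l 0 i = r%:R.
  rewrite -mxtrace_diag -OGO mxtrace_mulC mulmxA OTO mul1mx /G.
  rewrite /mxtrace (eq_bigr (fun=> 1)) ?sumr_const ?card_ord //.
  move=> i _; have := ynorm i; rewrite /norm2 => h.
  have s0 : 0 <= \sum_(j < d) row i Y 0 j ^+ 2 by apply: sumr_ge0 => j _; apply: sqr_ge0.
  transitivity (\sum_(j < d) row i Y 0 j ^+ 2); last by rewrite -(sqr_sqrtr s0) h expr1n.
  rewrite mxE; apply: eq_bigr => j _; by rewrite !mxE expr2.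
have lr : forall i, l 0 i <= r%:R.
  move=> i; rewrite -trl (bigD1 i) //= lerDl sumr_ge0 // => j _.
have detG : \det G = \prod_i l 0 i.
  have := congr1 determinant OGO; rewrite det_diag !det_mulmx det_tr => <-.
  have dO : \det O * \det O = 1.
    by rewrite -{2}(det_tr O) -det_mulmx OO det1.
  by rewrite mulrAC dO mul1r.
have dg := det_gram (ltW dpos) hyp.
rewrite -/G detG in dg.
set th := r%:R / K ^+ 2.
have thpos : 0 < th by rewrite divr_gt0 ?exprn_gt0 // ltr0n.
have thr : th <= r%:R.
  rewrite ler_pdivrMr ?exprn_gt0 // ler_peMr ?ler0n // expr_ge1 // ltW.
set S := [set i | th <= l 0 i].
have cnt : (m <= #|S|)%N.
  rewrite leqNgt; apply/negP => hS.
  have [i0 Hi0] : exists i0, i0 \notin S.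
    case: (pickP (fun i => i \notin S)) => [i0 h|h]; first by exists i0.
    have : S = setT by apply/setP => i; move: (h i) => /negbFE ->; rewrite inE.
    move=> ST; move: hS; rewrite ST cardsT card_ord => hS.
    by move: (leq_trans hS mr); rewrite ltnn.
  pose b i := if i \in S then r%:R else th.
  have bpos : forall i, 0 < b i.
    by move=> i; rewrite /b; case: ifP => _ //; rewrite ltr0n.
  have hlb : forall i, 0 <= l 0 i <= b i.
    move=> i; rewrite l0 /b /=; case: ifP => // /negbT; rewrite inE -ltNge => /ltW //.
  have hi0 : l 0 i0 < b i0 by rewrite /b (negPf Hi0); move: Hi0; rewrite inE -ltNge.
  have lt := prod_lt (l := fun i => l 0 i) hlb bpos hi0.
  have pb : \prod_i b i = r%:R ^+ #|S| * th ^+ #|~: S|.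
    rewrite (bigID (fun i => i \in S)) /=.
    rewrite (eq_bigr (fun=> r%:R)); last by move=> i hi; rewrite /b hi.
    rewrite [X in _ * X](eq_bigr (fun=> th)); last by move=> i /negPf hi; rewrite /b hi.
    rewrite prodr_const; congr (_ * _).
    rewrite (eq_bigl (fun i => i \in ~: S)) ?prodr_const // => i; by rewrite in_setC.
  have cS : #|~: S| = (r - #|S|)%N by rewrite cardsCs card_ord setCK.
  have kS : (#|S| <= m - 1)%N by move: hS; clear; lia.
  have hb : r%:R ^+ #|S| * th ^+ #|~: S| <= r%:R ^+ (m - 1) * th ^+ (r - m + 1).
    have e1 : (r - #|S| = (m - 1 - #|S|) + (r - m + 1))%N by move: kS mr mpos; clear; lia.
    have e2 : (m - 1 = #|S| + (m - 1 - #|S|))%N by move: kS; clear; lia.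
    rewrite cS e1 {2}e2 !exprD mulrA.
    apply: ler_wpM2r; first by rewrite mulr_ge0 // exprn_ge0 // ltW.
    apply: ler_wpM2l; first by rewrite exprn_ge0 // ler0n.
    by rewrite lerXn2r ?nnegrE ?ler0n // ltW.
  move: lt; rewrite pb => lt.
  have := lt_le_trans lt (le_trans hb (le_trans key dg)).
  by rewrite ltxx.
pose f (k : 'I_m) : 'I_r := enum_val (widen_ord cnt k).
have hf : forall k, th <= l 0 (f k).
  by move=> k; have := enum_valP (widen_ord cnt k); rewrite inE.
have finj : injective f.
  move=> k1 k2 /enum_val_inj /(congr1 val) /= h; exact: val_inj.
have lpos : forall k, 0 < l 0 (f k) by move=> k; apply: lt_le_trans (hf k).
pose c k := (Num.sqrt (l 0 (f k)))^-1.
pose W := \matrix_(k, i) (c k * O (f k) i) : 'M_(m, r).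
have WM : forall (M : 'M_r) k k',
    (W *m M *m W^T) k k' = c k * c k' * (O *m M *m O^T) (f k) (f k').
  move=> M k k'; rewrite !mxE mulr_sumr; apply: eq_bigr => j _.
  rewrite !mxE.
  have -> : \sum_i W k i * M i j = c k * \sum_i O (f k) i * M i j.
    by rewrite mulr_sumr; apply: eq_bigr => i _; rewrite mxE mulrA.
  ring.
exists (W *m Y); split.
  rewrite trmx_mul mulmxA -(mulmxA W) -/G; apply/matrixP => k k'.
  rewrite WM OGO !mxE.
  case: (eqVneq k k') => [<-|nk].
    rewrite !eqxx mulr1n /c -expr2 exprVn sqr_sqrtr ?ltW // mulVf //.
    by rewrite gt_eqF.
  have nf : f k != f k' by apply: contra nk => /eqP /finj ->.
  by rewrite (negPf nf) mulr0n mulr0.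
move=> a; apply: linf_le; first by rewrite mulr_ge0 ?linf_ge0.
move=> k.
set v := a *m Y^T.
have c0 : 0 <= c k by rewrite /c invr_ge0 sqrtr_ge0.
have e : (a *m (W *m Y)^T) 0 k = \sum_i v 0 i * (c k * O (f k) i).
  rewrite trmx_mul mulmxA mxE; apply: eq_bigr => i _; rewrite !mxE //.
rewrite e.
have Osum : \sum_i O (f k) i ^+ 2 = 1.
  have := congr1 (fun M : 'M_r => M (f k) (f k)) OO; rewrite [RHS]mxE eqxx mulr1n => <-.
  rewrite mxE; apply: eq_bigr => i _; by rewrite [O^T i (f k)]mxE expr2.
have cs := cs_sum Osum.
have ck : c k * Num.sqrt r%:R <= K.
  have lk := hf k; rewrite /th ler_pdivrMr ?exprn_gt0 // in lk.
  rewrite /c mulrC -(sqrtrV (ltW (lpos k))) -sqrtrM ?ler0n //.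
  rewrite -(ger0_norm K0) -sqrtr_sqr ler_sqrt ?sqr_ge0 //.
  by rewrite ler_pdivrMr // mulrC.
apply: le_trans (ler_norm_sum _ _ _) _.
apply: (le_trans (y := \sum_i linf v * (c k * `|O (f k) i|))).
  apply: ler_sum => i _; rewrite normrM normrM (ger0_norm c0).
  by apply: ler_wpM2r; [rewrite mulr_ge0 | apply: linf_ge].
rewrite -mulr_sumr -mulr_sumr mulrC; apply: ler_wpM2r; first exact: linf_ge0.
apply: le_trans ck; apply: ler_wpM2l => //.
Qed.
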